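(* Let $n$ be a positive integer and $j$ a non-negative integer. Then $$\binom{2j}{j}\sum_{k=j}^{n-1}(4k+3)\binom{k}{j}^2\equiv 0\pmod n.$$
   Context: An empty sum (when $j>n-1$) is zero. *)

(* Defs.v *)
From mathcomp Require Import all_boot.

(* Main.v *)
Require Import Defs.
From mathcomp Require Import all_boot.
From mathcomp Require Import all_algebra ring.

Import GRing.Theory.

Section Aux.
Local Open Scope ring_scope.

Lemma natid (n d : nat) :
  (n.+1 * 'C(n.+1, d) = (n + d).+1 * 'C(n, d) + d * 'C(n, d.-1))%N.
Proof.
case: d => [|e]; first by rewrite !bin0 addn0 mul0n addn0.
rewrite binS /= mulnDr.
have h := mul_bin_left n e.
have h2 : (n.+1 * 'C(n, e) = e.+1 * 'C(n, e.+1) + e.+1 * 'C(n, e))%N.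
  rewrite h -mulnDl; case: (leqP e n) => he.
    by rewrite addnS subnK.
  by rewrite (bin_small he) !muln0.
rewrite h2; ring.
Qed.

Lemma L1 (n j : nat) :
  ((j.+1 * 'C(n, j.+1))%N%:R = (n%:R - j%:R) * ('C(n, j))%:R :> int).
Proof.
case: (leqP j n) => hj.
  by rewrite mul_bin_left natrM natrB.
rewrite (bin_small hj) (@bin_small n j.+1) ?muln0 ?mulr0 // ltnW // ltnW.
Qed.

Definition A (j n : nat) : int :=
  \sum_(0 <= d < j.+1) (-1) ^+ (j + d) * ('C(j + d, d) * 'C(n, d))%N%:R.

Definition P (j n : nat) : int := A j n + 2 * ('C(j.*2, j) * 'C(n, j.+1))%N%:R.

Definition v (j n e : nat) : int :=
  (-1) ^+ (j + e) * ('C(j + e, e) * (j + e).+1 * 'C(n, e))%N%:R.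

Lemma partial (j n m : nat) :
  \sum_(0 <= d < m) (-1) ^+ (j + d) *
     ('C(j + d, d) * ((j + d).+1 * 'C(n, d) + d * 'C(n, d.-1)))%N%:R
  = if m is e.+1 then v j n e else 0.
Proof.
elim: m => [|m IH]; first by rewrite big_geq.
rewrite big_nat_recr //= IH; case: m {IH} => [|e].
  by rewrite /v add0r !addn0 mulnA.
rewrite /v !addnS /= exprS.
have hb := mul_bin_diag (j + e).+1 e.
rewrite /= in hb.
have -> : ('C((j + e).+1, e.+1) * ((j + e).+2 * 'C(n, e.+1) + e.+1 * 'C(n, e))
   = 'C((j + e).+1, e.+1) * (j + e).+2 * 'C(n, e.+1) + 'C(j + e, e) * (j + e).+1 * 'C(n, e))%N.
  rewrite mulnDr mulnA; congr addn.
  rewrite mulnDr mulnA.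
  have h3 : ('C(j + e, e) * (j + e).+1 = 'C((j + e).+1, e.+1) * e.+1)%N by rewrite mulnC hb mulnC.
  by rewrite h3; ring.

rewrite natrD; ring.
Qed.

Lemma termid (n j d : nat) :
  (n.+1)%:R * ('C(n.+1, d))%:R - (n%:R - j%:R) * ('C(n, d))%:R
  = (((j + d).+1 * 'C(n, d) + d * 'C(n, d.-1))%N%:R : int).
Proof.
have h := natid n d.
have h' : ((n.+1)%:R * ('C(n.+1, d))%:R = ((n + d).+1)%:R * ('C(n, d))%:R
            + d%:R * ('C(n, d.-1))%:R :> int).
  by rewrite -!natrM -natrD h.
rewrite h' natrD !natrM; ring.
Qed.

Lemma KeyA (j n : nat) :
  (n.+1)%:R * A j n.+1 - (n%:R - j%:R) * A j n
  = (((j.*2).+1 * 'C(j.*2, j) * 'C(n, j))%N%:R : int).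
Proof.
rewrite /A !mulr_sumr -sumrB.
rewrite (eq_bigr (fun d => (-1) ^+ (j + d) *
     ('C(j + d, d) * ((j + d).+1 * 'C(n, d) + d * 'C(n, d.-1)))%N%:R)); last first.
  move=> d _.
  rewrite natrM [in RHS]natrM -termid !natrM; ring.
rewrite partial /v addnn -mul2n exprM sqrrN !expr1n mul1r.
by congr (_%:R); rewrite mul2n; ring.
Qed.

Lemma KeyP (j n : nat) :
  (n.+1)%:R * P j n.+1 - (n%:R - j%:R) * P j n
  = (('C(j.*2, j) * (4 * n + 3) * 'C(n, j))%N%:R : int).
Proof.
have kA := KeyA j n.
have e1 := termid n j j.+1.
have e2 := L1 n j.
rewrite natrD !natrM in e1.
rewrite natrM in e2.
rewrite natrM in kA.
rewrite /P !natrM.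
have h3 : (((j + j.+1).+1)%:R * ('C(n, j.+1))%:R
     = 2 * ((j.+1)%:R * ('C(n, j.+1))%:R) :> int).
  rewrite mulrA -[2]/(2%:R) -!natrM; congr (_%:R); ring.
rewrite h3 e2 in e1.
set a1 := A j n.+1 in kA *; set a0 := A j n in kA *.
set c2 := ('C(j.*2, j))%:R : int.
set C1 := ('C(n.+1, j.+1))%:R : int in e1 *.
set C0 := ('C(n, j.+1))%:R : int in e1 *.
set Cj := ('C(n, j))%:R : int in e1 kA *.
set N := n%:R : int in e1 kA *. set J := j%:R : int in e1 kA *.
have -> : (n.+1)%:R * (a1 + 2 * (c2 * C1)) - (N - J) * (a0 + 2 * (c2 * C0))
  = ((n.+1)%:R * a1 - (N - J) * a0) + 2 * c2 * ((n.+1)%:R * C1 - (N - J) * C0) by ring.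
rewrite kA e1 /N /J.
rewrite /c2 /Cj -mul2n !natrM !natrD; ring.
Qed.

Lemma Main (j n : nat) :
  (('C(j.*2, j) * \sum_(0 <= k < n) (4 * k + 3) * 'C(k, j) ^ 2)%N%:R : int)
  = ((j.+1 * 'C(n, j.+1))%N)%:R * P j n.
Proof.
elim: n => [|n IH].
  by rewrite big_geq // muln0 bin0n /= muln0 mul0r.
rewrite big_nat_recr //= mulnDr natrD IH.
rewrite -(mul_bin_diag n.+1 j) /= (L1 n j) !natrM.
have kp := KeyP j n.
have -> : (n.+1)%:R * ('C(n, j))%:R * P j n.+1
   = ('C(n, j))%:R * ((n.+1)%:R * P j n.+1 - (n%:R - j%:R) * P j n)
     + ('C(n, j))%:R * (n%:R - j%:R) * P j n :> int by ring.
rewrite kp !natrM; ring.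
Qed.

End Aux.

Theorem mainTheorem10 (n j : nat) (hn : 0 < n) :
  n %| 'C(j.*2, j) * \sum_(j <= k < n) (4 * k + 3) * 'C(k, j) ^ 2.
Proof.
have hsum : \sum_(j <= k < n) (4 * k + 3) * 'C(k, j) ^ 2
          = \sum_(0 <= k < n) (4 * k + 3) * 'C(k, j) ^ 2.
  case: (leqP j n) => hj.
    rewrite (@big_cat_nat _ _ _ j 0 n) //= [X in _ = X + _]big_nat [X in _ = X + _]big1 ?add0n // => k /andP [_ hk].
    by rewrite bin_small // muln0.
  rewrite big_geq ?(ltnW hj) // big_nat big1 // => k /andP [_ hk].
  by rewrite bin_small ?muln0 // (ltn_trans hk hj).
rewrite hsum.
have hm := Main j n.
rewrite -mul_bin_diag in hm.
have : (n%:Z %| ('C(j.*2, j) * \sum_(0 <= k < n) (4 * k + 3) * 'C(k, j) ^ 2)%N%:Z)%Z.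
  apply/dvdzP; exists ((('C(n.-1, j))%:Z * P j n)%R).
  rewrite -!natz hm GRing.Theory.natrM; ring.
by rewrite dvdzE !absz_nat.
Qed.
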